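(* Let $G$ be a graph, $\mathcal{B}$ a set of balls in $G$, $X\subset V(G)$, $\mathcal{H}$ the set of connected components of $G-X$, and $G'$ an induced subgraph of $G$. Suppose $X\subseteq V(G')$ and, for every $H\in\mathcal{H}$, either (1) $V(H)\subseteq V(G')$, or (2) $V(H)\cap V(G')=\emptyset$ and there exist distinct $H',H''$ with $H'\sim_{\mathcal{B}}H$, $H''\sim_{\mathcal{B}}H$ and $V(H')\cup V(H'')\subseteq V(G')$. Then the set $\mathcal{B}'=\{B_r(u)\cap V(G') : B_r(u)\in\mathcal{B},\ u\in V(G')\}$ is a set of balls in $G'$. Moreover, there is a bijection between the balls in $\mathcal{B}'$ and the balls in $\mathcal{B}$ centered in $V(G')$.
   Context: For a graph $G$, $r\ge 0$ and $v\in V(G)$, the ball $B_r(v)$ is the set of vertices at distance at most $r$ from $v$ (its center). Two components $H,H'\in\mathcal{H}$ are twin-blocks with respect to $\mathcal{B}$, written $H\sim_{\mathcal{B}}H'$, if there is an isomorphism $\alpha$ from $H$ to $H'$ such that (i) for each $u\in V(H)$ and $x\in X$, $ux\in E(G)$ iff $\alpha(u)x\in E(G)$, and (ii) for each $u\in V(H)$ and $r\in\mathbb{N}$, $B_r(u)\in\mathcal{B}$ iff $B_r(\alpha(u))\in\mathcal{B}$. *)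

(* Defs.v *)
From mathcomp Require Import all_boot.
Set Implicit Arguments. Unset Strict Implicit. Unset Printing Implicit Defensive.

Section Graphs.
Variable T : finType.

Definition simple_graph (e : rel T) : Prop := symmetric e /\ irreflexive e.

(* Ball of radius r around v in the subgraph of (T, e) induced by S:
   the vertices of S reachable from v by a walk of length <= r inside S.
   (Empty if v \notin S; we only use it with v \in S.) *)
Fixpoint ball (S : {set T}) (e : rel T) (r : nat) (v : T) : {set T} :=
  match r with
  | 0 => [set v] :&: S
  | r'.+1 => ball S e r' v :|: [set y in S | [exists x in ball S e r' v, e x y]]
  end.

Definition ballG (e : rel T) (r : nat) (v : T) : {set T} := ball setT e r v.

Definition is_ball_in (S : {set T}) (e : rel T) (beta : {set T}) : Prop :=
  exists u r, u \in S /\ beta = ball S e r u.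

Definition edge_minus (X : {set T}) (e : rel T) : rel T :=
  fun a b => [&& e a b, a \notin X & b \notin X].

Definition component (e : rel T) (X C : {set T}) : Prop :=
  exists x, x \notin X /\ C = [set y | connect (edge_minus X e) x y].

Definition twin (e : rel T) (X : {set T}) (B : {set {set T}}) (H H' : {set T}) : Prop :=
  exists alpha : T -> T,
    [/\ {in H &, injective alpha},
        alpha @: H = H',
        (forall u v, u \in H -> v \in H -> e (alpha u) (alpha v) = e u v),
        (forall u x, u \in H -> x \in X -> e u x = e (alpha u) x) &
        (forall u r, u \in H -> (ballG e r u \in B) = (ballG e r (alpha u) \in B))].

End Graphs.

(* Main.v *)
Require Import Defs.
From mathcomp Require Import all_boot.
From Stdlib Require Import Classical ClassicalEpsilon.
Set Implicit Arguments. Unset Strict Implicit. Unset Printing Implicit Defensive.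

Section Aux.
Variable T : finType.
Variable e : rel T.
Hypothesis esym : symmetric e.
Variable X : {set T}.

Definition comp (w : T) : {set T} := [set y | connect (edge_minus X e) w y].

Lemma em_sym : connect_sym (edge_minus X e).
Proof.
apply: sym_connect_sym => a b; rewrite /edge_minus esym.
by case: (a \in X); case: (b \in X); rewrite ?andbF ?andbT.
Qed.

Lemma comp_self w : w \in comp w.
Proof. by rewrite inE connect0. Qed.

Lemma comp_same w v : v \in comp w -> comp v = comp w.
Proof.
rewrite inE => c; apply/setP => y; rewrite !inE.
by rewrite (same_connect em_sym c).
Qed.

Lemma comp_of_component H w : component e X H -> w \in H -> comp w = H.
Proof.
move=> [x [_ ->]] wH; exact: (@comp_same x w wH).
Qed.

Lemma component_comp w : w \notin X -> component e X (comp w).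
Proof. by move=> wX; exists w. Qed.

Lemma comp_edge w a b : a \in comp w -> b \notin X -> a \notin X -> e a b -> b \in comp w.
Proof.
rewrite !inE => c bX aX eab; apply: connect_trans c _; apply: connect1.
by rewrite /edge_minus eab aX bX.
Qed.

Lemma component_inter H1 H2 y : component e X H1 -> component e X H2 ->
  y \in H1 -> y \in H2 -> H1 = H2.
Proof.
move=> c1 c2 y1 y2; by rewrite -(comp_of_component c1 y1) -(comp_of_component c2 y2).
Qed.

Definition fold (M : pred T) (G : {set T} -> T -> T) (w : T) :=
  if M w then G (comp w) w else w.

Lemma hom_fold (M : pred T) (G : {set T} -> T -> T) :
  (forall w, M w -> w \notin X) ->
  (forall a b, M a -> b \notin X -> e a b -> M b) ->
  (forall w a b, M w -> a \in comp w -> b \in comp w -> e (G (comp w) a) (G (comp w) b) = e a b) ->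
  (forall w a x, M w -> a \in comp w -> x \in X -> e (G (comp w) a) x = e a x) ->
  forall a b, e a b -> e (fold M G a) (fold M G b).
Proof.
move=> MX Mcl Ge GX a b eab; rewrite /fold.
case Ma: (M a); case Mb: (M b) => //.
- have bc : b \in comp a by apply: comp_edge (comp_self a) _ _ eab; rewrite MX.
  rewrite (comp_same bc) Ge //; exact: comp_self.
- have bX : b \in X by apply/negPn/negP => bX; move: (Mcl _ _ Ma bX eab); rewrite Mb.
  by rewrite GX // comp_self.
- have aX : a \in X by apply/negPn/negP => aX; move: (Mcl _ _ Mb aX); rewrite esym Ma => /(_ eab).
  by rewrite esym GX // ?comp_self // esym.
Qed.

Lemma ball_sub (S : {set T}) r u : ball S e r u \subset S.
Proof.
elim: r => [|r IH] /=; first exact: subsetIr.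
rewrite subUset IH /=; apply/subsetP => y; by rewrite inE => /andP [].
Qed.

Lemma ball_hom (g : T -> T) (S S' : {set T}) r u v :
  (forall a b, a \in S -> b \in S -> e a b -> e (g a) (g b)) ->
  (forall w, w \in S -> g w \in S') ->
  v \in ball S e r u -> g v \in ball S' e r (g u).
Proof.
move=> gh gS; elim: r v => [|r IH] v /=.
  by rewrite !inE => /andP [/eqP -> uS]; rewrite eqxx gS.
rewrite !inE => /orP [/IH -> //|/andP [vS /existsP [x /andP [xb exv]]]].
apply/orP; right; rewrite gS //=; apply/existsP; exists (g x).
rewrite IH //= gh //; exact: (subsetP (ball_sub S r u)).
Qed.

Lemma twin_inv B K H : twin e X B K H ->
  exists (al b : T -> T), [/\ forall a, a \in H -> b a \in K /\ al (b a) = a,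
    forall a c, a \in K -> c \in K -> e (al a) (al c) = e a c,
    forall a x, a \in K -> x \in X -> e (al a) x = e a x,
    forall a c, a \in H -> c \in H -> e (b a) (b c) = e a c &
    forall a x, a \in H -> x \in X -> e (b a) x = e a x].
Proof.
move=> [al [inj im ed ad _]].
pose b w := odflt w [pick k in K | al k == w].
have bP a : a \in H -> b a \in K /\ al (b a) = a.
  rewrite -im => /imsetP [k kK ->]; rewrite /b.
  case: pickP => [k' /andP [k'K /eqP E]|/(_ k)]; last by rewrite kK eqxx.
  by rewrite /= E.
exists al, b; split => //.
- by move=> a x aK xX; rewrite (ad a x aK xX).
- move=> a c /bP [aK ea] /bP [cK ec]; by rewrite -ed // ea ec.
- move=> a x /bP [aK ea] xX; by rewrite ad // ea.
Qed.

Lemma comp_notX k y : k \notin X -> y \in comp k -> y \notin X.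
Proof.
rewrite inE => kX /connectP [p pth ->] {y}.
elim: p k kX pth => [|z p IH] k kX //= /andP [em pth].
apply: IH pth; by case/and3P: em.
Qed.

Lemma component_notX K y : component e X K -> y \in K -> y \notin X.
Proof. move=> [k [kX ->]]; exact: comp_notX. Qed.

End Aux.
Unset Implicit Arguments.
Theorem lemma22 (T : finType) (e : rel T) (B : {set {set T}}) (X S : {set T}) :
  simple_graph e ->
  (forall beta, beta \in B -> is_ball_in setT e beta) ->
  X \subset S ->
  (forall H, component e X H ->
     H \subset S \/
     (H :&: S = set0 /\
      exists H' H'', [/\ component e X H', component e X H'', H' <> H'',
                         twin e X B H' H /\ twin e X B H'' H & H' :|: H'' \subset S])) ->
  let B' := fun beta' : {set T} =>
    exists beta u r, [/\ beta \in B, u \in S, beta = ballG e r u & beta' = beta :&: S] in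
  let Bc := fun beta : {set T} =>
    beta \in B /\ exists u r, u \in S /\ beta = ballG e r u in
  (forall beta', B' beta' -> is_ball_in S e beta') /\
  exists f : {set T} -> {set T},
    [/\ (forall beta, Bc beta -> B' (f beta)),
        (forall b1 b2, Bc b1 -> Bc b2 -> f b1 = f b2 -> b1 = b2) &
        (forall beta', B' beta' -> exists beta, Bc beta /\ f beta = beta')].
Proof.
move=> [esy _] HB XS Hc B' Bc.
have notS_X w : w \notin S -> w \notin X.
  by apply: contra => wX; apply: (subsetP XS).
have Hn w : w \notin S -> component e X (comp e X w) /\ (comp e X w :&: S = set0 /\
      exists H' H'', [/\ component e X H', component e X H'', H' <> H'',
                         twin e X B H' (comp e X w) /\ twin e X B H'' (comp e X w) & H' :|: H'' \subset S]).
  move=> wS; have cw := component_comp e (notS_X _ wS).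
  split => //; case: (Hc _ cw) => // /subsetP /(_ w (comp_self e X w)); by rewrite (negbTE wS).
have empty_notS H w : H :&: S = set0 -> w \in H -> w \notin S.
  move=> /setP /(_ w); rewrite !inE => E wH; move: E; rewrite wH /= => -> //.
(* global retraction *)
have ex : forall C : {set T}, exists g : T -> T,
    (component e X C /\ ~~ (C \subset S)) ->
    [/\ forall a, a \in C -> g a \in S,
        forall a c, a \in C -> c \in C -> e (g a) (g c) = e a c &
        forall a x, a \in C -> x \in X -> e (g a) x = e a x].
  move=> C; case: (classic (component e X C /\ ~~ (C \subset S))) => [[cC nCS]|N]; last by exists id.
  case: (Hc C cC) => [CS|[CS0 [H' [H'' [c1 c2 ne [t1 t2] sub]]]]]; first by rewrite CS in nCS.
  case: (twin_inv t1) => al [b [b1 _ _ b2 b3]]; exists b => _; split => //.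
  move=> a /b1 [aH' _]; apply: (subsetP sub); by rewrite inE aH'.
pose Gm C := proj1_sig (constructive_indefinite_description _ (ex C)).
have GmP C := proj2_sig (constructive_indefinite_description _ (ex C)).
pose g := fold e X (fun w => w \notin S) Gm.
have Gw w : w \notin S -> [/\ forall a, a \in comp e X w -> Gm (comp e X w) a \in S,
        forall a c, a \in comp e X w -> c \in comp e X w -> e (Gm (comp e X w) a) (Gm (comp e X w) c) = e a c &
        forall a x, a \in comp e X w -> x \in X -> e (Gm (comp e X w) a) x = e a x].
  move=> wS; apply: GmP; split; first by case: (Hn w wS).
  apply/negP => /subsetP /(_ w (comp_self e X w)); by rewrite (negbTE wS).
have ghom : forall a b, e a b -> e (g a) (g b).
  apply: (hom_fold esy) => //.
  - move=> a b aS bX eab; case: (Hn a aS) => _ [E _].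
    apply: (empty_notS _ _ E); apply: (comp_edge (comp_self e X a)) => //; exact: notS_X.
  - by move=> w a b /Gw [_ G2 _]; apply: G2.
  - by move=> w a x /Gw [_ _ G3]; apply: G3.
have gS w : g w \in S.
  rewrite /g /fold; case: ifP => [wS|/negbFE //]; case: (Gw w wS) => G1 _ _.
  exact/G1/comp_self.
have gid s : s \in S -> g s = s by move=> sS; rewrite /g /fold sS.
have key u r : u \in S -> ballG e r u :&: S = ball S e r u.
  move=> uS; apply/setP => v; rewrite inE; apply/andP/idP.
  - move=> [vb vS]; have := ball_hom (g:=g) (S:=setT) (S':=S) _ _ vb.
    by rewrite !gid //; apply => // a b _ _; apply: ghom.
  - move=> vb; split; last exact: (subsetP (ball_sub e S r u) v vb).
    have := ball_hom (g:=id) (S:=S) (S':=setT) _ _ vb; apply => //.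
split.
  move=> beta' [beta [u [r [bB uS bE ->]]]]; exists u, r; split => //.
  by rewrite bE key.
exists (fun beta => beta :&: S); split.
- move=> beta [bB [u [r [uS bE]]]]; by exists beta, u, r.
- have half : forall u1 r1 u2 r2 v, u1 \in S -> u2 \in S ->
      ballG e r1 u1 :&: S = ballG e r2 u2 :&: S -> v \in ballG e r1 u1 -> v \in ballG e r2 u2.
    move=> u1 r1 u2 r2 v u1S u2S E vb.
    case vS: (v \in S).
      have : v \in ballG e r1 u1 :&: S by rewrite inE vb vS.
      by rewrite E inE => /andP [].
    move/negbT: vS => vS; case: (Hn v vS) => cH [HS [H' [H'' [c1 c2 ne [t1 t2] sub]]]].
    set H := comp e X v in cH HS t1 t2.
    have vH : v \in H := comp_self e X v.
    have inner : forall K, component e X K -> twin e X B K H -> K \subset S -> u2 \notin K ->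
        v \in ballG e r2 u2.
      move=> K cK tK KS u2K.
      case: (twin_inv tK) => al [b [b1 a2 a3 b2 b3]].
      have compH w : w \in H -> comp e X w = H by move=> wH; apply: comp_of_component.
      have compK w : w \in K -> comp e X w = K by move=> wK; apply: comp_of_component.
      pose F1 := fold e X (fun w => w \in H) (fun _ => b).
      pose F2 := fold e X (fun w => w \in K) (fun _ => al).
      have F1h : forall a c, e a c -> e (F1 a) (F1 c).
        apply: (hom_fold esy) => //.
        - move=> w wH; apply: notS_X; exact: (empty_notS _ _ HS).
        - move=> a c aH cX eac; rewrite -(compH a aH).
          apply: (comp_edge (comp_self e X a)) => //.
          apply: notS_X; exact: (empty_notS _ _ HS).
        - by move=> w a c /= wH; rewrite compH // => aH cH'; apply: b2.
        - by move=> w a x /= wH; rewrite compH // => aH xX; apply: b3.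
      have F2h : forall a c, e a c -> e (F2 a) (F2 c).
        apply: (hom_fold esy) => //.
        - move=> w wK; exact: (component_notX cK).
        - move=> a c aK cX eac; rewrite -(compK a aK).
          apply: (comp_edge (comp_self e X a)) => //.
          exact: (component_notX cK).
        - by move=> w a c /= wK; rewrite compK // => aK cK'; apply: a2.
        - by move=> w a x /= wK; rewrite compK // => aK xX; apply: a3.
      have u1H : u1 \notin H by apply/negP => /(empty_notS _ _ HS); rewrite u1S.
      have := ball_hom (g:=F1) (S:=setT) (S':=setT) _ _ vb.
      rewrite /F1 /fold /= (negbTE u1H) vH => /(_ (fun a c _ _ => F1h a c)) /(_ (fun w _ => in_setT _)).
      case: (b1 v vH) => bvK abv bvb.
      have : b v \in ballG e r1 u1 :&: S by rewrite inE bvb (subsetP KS).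
      rewrite E inE => /andP [bvb2 _].
      have := ball_hom (g:=F2) (S:=setT) (S':=setT) _ _ bvb2.
      rewrite /F2 /fold /= (negbTE u2K) bvK abv.
      by apply => // a c _ _; apply: F2h.
    case u2H': (u2 \in H').
    + apply: (inner H'') => //.
      * apply: subset_trans sub; exact: subsetUr.
      * apply/negP => u2H''; apply: ne; exact: (component_inter esy c1 c2 u2H' u2H'').
    + apply: (inner H') => //; last by rewrite u2H'.
      apply: subset_trans sub; exact: subsetUl.
  move=> b1 b2 [_ [u1 [r1 [u1S ->]]]] [_ [u2 [r2 [u2S ->]]]] E.
  apply/setP => v; apply/idP/idP; [exact: half E | apply: half (esym E) => //].
- move=> beta' [beta [u [r [bB uS bE ->]]]]; exists beta; split => //.
  split => //; by exists u, r.
Qed.
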